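(* Let $G_1$ and $G_2$ be directed graphs without self-loops on the common vertex set $[n]$ that are distribution equivalent, i.e. $\mathcal{P}(G_1)=\mathcal{P}(G_2)$. Then the condensation graphs of $G_1$ and $G_2$ are identical.
   Context: For a directed graph $G$ on $[n]$ without self-loops, let $B_G\in\{0,1\}^{n\times n}$ be its adjacency matrix with $[B_G]_{ij}=1$ iff there is an edge $j\to i$. A linear structural causal model consistent with $G$ is $\mathbf{x}=W\mathbf{x}+\mathbf{e}$ where $W\in\mathbb{R}^{n\times n}$ has $\{(i,j):W_{ij}\neq 0\}=\{(i,j):[B_G]_{ij}=1\}$, $I-W$ is invertible, and the noise vector $\mathbf{e}$ has jointly independent components of which at most one is Gaussian. The distribution set $\mathcal{P}(G)$ is the set of all distributions of $\mathbf{x}=(I-W)^{-1}\mathbf{e}$ arising from all such $W$ and noise distributions. Strongly connected components (SCCs) are the equivalence classes of the relation ''there are directed paths $u\to v$ and $v\to u$''. The condensation graph of $G$ is the directed graph whose vertices are the SCCs of $G$, with an edge from SCC $S$ to SCC $S'\neq S$ iff $G$ has an edge from some vertex of $S$ to some vertex of $S'$. *)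

(* Defs.v *)
From HB Require Import structures.
From mathcomp Require Import all_boot all_order all_algebra.
From mathcomp Require Import all_classical all_reals all_analysis.
Set Implicit Arguments.
Unset Strict Implicit.
Unset Printing Implicit Defensive.
Import Order.TTheory GRing.Theory Num.Theory.
Local Open Scope classical_set_scope.
Local Open Scope ring_scope.

Definition digraph (n : nat) := 'I_n -> 'I_n -> bool.

Definition loopless n (G : digraph n) : Prop := forall i, ~~ G i i.

(* Adjacency matrix convention: [B_G]_{ij} = 1 iff edge j -> i. *)
Definition adj_mx n (G : digraph n) : 'M[nat]_n :=
  \matrix_(i, j) nat_of_bool (G j i).

Definition consistent (R : realType) n (G : digraph n) (W : 'M[R]_n) : Prop :=
  forall i j, (W i j != 0) = (adj_mx G i j == 1%N).

Definition jointly_independent d (Omega : measurableType d) (R : realType)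
  (P : probability Omega R) n (e : 'I_n -> Omega -> R) : Prop :=
  forall A : 'I_n -> set R, (forall i, measurable (A i)) ->
    P (\bigcap_(i in [set: 'I_n]) (e i @^-1` A i)) =
    (\prod_(i < n) P (e i @^-1` A i))%E.

Definition is_gaussian d (Omega : measurableType d) (R : realType)
  (P : probability Omega R) (X : Omega -> R) : Prop :=
  exists (m s : R), s != 0 /\
    forall A : set R, measurable A -> P (X @^-1` A) = normal_prob m s A.

(* Distributions on R^n are represented as set functions on n.-tuple R
   (with its product sigma-algebra); only values on measurable sets matter. *)
Definition distr_Rn (R : realType) (n : nat) := set (n.-tuple R) -> \bar R.

Definition lsem_distrs (R : realType) n (G : digraph n) : set (distr_Rn R n) :=
  fun mu =>
  exists (W : 'M[R]_n),
    consistent G W /\ (1%:M - W) \in unitmx /\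
  exists (d : measure_display) (Omega : measurableType d)
         (P : probability Omega R) (e : 'I_n -> Omega -> R),
    (forall i, measurable_fun [set: Omega] (e i)) /\
    jointly_independent P e /\
    (forall i j, is_gaussian P (e i) -> is_gaussian P (e j) -> i = j) /\
    let x : Omega -> n.-tuple R :=
      fun w => [tuple \sum_(j < n) invmx (1%:M - W) i j * e j w | i < n] in
    forall A : set (n.-tuple R), measurable A -> mu A = P (x @^-1` A).

Definition scc n (G : digraph n) (u : 'I_n) : {set 'I_n} :=
  [set v | connect G u v && connect G v u].

Definition sccs n (G : digraph n) : {set {set 'I_n}} :=
  [set scc G u | u : 'I_n].

Definition cond_edge n (G : digraph n) (S T : {set 'I_n}) : bool :=
  [&& S \in sccs G, T \in sccs G, S != T &
      [exists u in S, exists v in T, G u v]].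

Definition same_condensation n (G1 G2 : digraph n) : Prop :=
  sccs G1 = sccs G2 /\ forall S T, cond_edge G1 S T = cond_edge G2 S T.
Arguments lsem_distrs R {n} G.

(* Main.v *)
Require Import Defs.
From HB Require Import structures.
From mathcomp Require Import all_boot all_order all_algebra.
From mathcomp Require Import all_classical all_reals all_analysis.
From mathcomp Require Import zify ring lra.
Set Implicit Arguments.
Unset Strict Implicit.
Unset Printing Implicit Defensive.
Import Order.TTheory GRing.Theory Num.Theory.

Section Comb.
Variables (n : nat) (G1 G2 : digraph n) (t : 'I_n -> 'I_n).
Hypotheses (l1 : loopless G1) (l2 : loopless G2) (tinj : injective t).
Hypothesis H1 : forall i, t i = i \/ G1 i (t i).
Hypothesis H2 : forall i j, i != j -> G2 j i = (t i == j) || G1 j (t i).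

Lemma fc_G1 a b : fconnect t a b -> connect G1 a b.
Proof.
apply: connect_sub => x y /eqP <-.
by case: (H1 x) => [->|h]; [exact: connect0|exact: connect1].
Qed.

Lemma fc_G2 a b : fconnect t a b -> connect G2 b a.
Proof.
move=> h; have : connect (fun x y => G2 y x) a b.
  apply: connect_sub h => x y /eqP <-.
  have [->|ne] := eqVneq (t x) x; first exact: connect0.
  apply: connect1; rewrite H2 ?eqxx //; by rewrite eq_sym.
move/connectP => [p]; elim: p a b {h} => [|y p IH] a b /=.
  by move=> _ ->; exact: connect0.
move=> /andP[e pp] ->; exact: connect_trans (IH _ _ pp erefl) (connect1 e).
Qed.

Lemma tback i : fconnect t (t i) i.
Proof. by rewrite fconnect_sym //; exact: fconnect1. Qed.

Lemma c21 a b : connect G2 a b -> connect G1 a b.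
Proof.
apply: connect_sub => j i e.
have ne : i != j by apply/eqP => eij; subst; move: (l2 j); rewrite e.
move: e; rewrite H2 // => /orP[/eqP <-|e]; first exact: fc_G1 (tback i).
apply: connect_trans (connect1 e) _; exact: fc_G1 (tback i).
Qed.

Lemma c12 a b : connect G1 a b -> connect G2 a b.
Proof.
apply: connect_sub => j k e.
pose i := finv t k.
have ti : t i = k by rewrite /i f_finv.
have [eij|nij] := eqVneq i j.
  by rewrite -ti -eij; apply: fc_G2; exact: tback.
apply: (@connect_trans _ _ i).
  by apply: connect1; rewrite H2 // ti e orbT.
rewrite -ti; apply: fc_G2; exact: tback.
Qed.

Lemma conn_eq a b : connect G1 a b = connect G2 a b.
Proof. by apply/idP/idP; [exact: c12|exact: c21]. Qed.

Lemma scc_eq u : scc G1 u = scc G2 u.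
Proof. by apply/setP => v; rewrite !inE !conn_eq. Qed.

Lemma sccs_eq : sccs G1 = sccs G2.
Proof. by apply/setP => S; rewrite /sccs; apply/imsetP/imsetP => -[u _ ->]; exists u => //; rewrite scc_eq. Qed.

Lemma in_scc_tr (S : {set 'I_n}) u v : S \in sccs G1 -> u \in S -> connect G1 u v -> connect G1 v u -> v \in S.
Proof.
move=> /imsetP[w _ ->]; rewrite !inE => /andP[a b] c d.
by rewrite (connect_trans a c) (connect_trans d b).
Qed.

Lemma scc_disj (S T : {set 'I_n}) u : S \in sccs G1 -> T \in sccs G1 -> u \in S -> u \in T -> S = T.
Proof.
move=> /imsetP[a _ ->] /imsetP[b _ ->]; rewrite !inE => /andP[a1 a2] /andP[b1 b2].
apply/setP => v; rewrite !inE; apply/andP/andP => -[x y]; split.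
- exact: connect_trans b1 (connect_trans a2 x).
- exact: connect_trans (connect_trans y a1) b2.
- exact: connect_trans a1 (connect_trans b2 x).
- exact: connect_trans (connect_trans y b1) a2.
Qed.

Lemma same_cond : same_condensation G1 G2.
Proof.
split; first exact: sccs_eq.
move=> S T; rewrite /cond_edge -sccs_eq.
case SS: (S \in sccs G1) => //; case TT: (T \in sccs G1) => //.
have [->|ST] //= := eqVneq S T.
apply/existsP/existsP => -[u /andP[uS /existsP[v /andP[vT e]]]]; exists u; rewrite uS /=.
- pose i := finv t v.
  have ti : t i = v by rewrite /i f_finv.
  apply/existsP; exists i.
  have iT : i \in T.
    apply: in_scc_tr TT vT _ _; rewrite -ti; [exact: fc_G1 (tback i)|].
    exact: fc_G1 (fconnect1 _ _).
  rewrite iT /= H2 ?ti ?e ?orbT //.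
  apply/eqP => iu; move/eqP: ST; apply; apply: scc_disj SS TT uS _; by rewrite -iu.
- apply/existsP; exists (t v).
  have tT : t v \in T.
    apply: in_scc_tr TT vT _ _; [exact: fc_G1 (fconnect1 _ _)|exact: fc_G1 (tback v)].
  have nuv : v != u.
    apply/eqP => vu; move/eqP: ST; apply; apply: scc_disj SS TT uS _; by rewrite -vu.
  move: e; rewrite H2 // => /orP[/eqP tu|->]; last by rewrite tT.
  move/eqP: ST; case; apply: scc_disj SS TT uS _; by rewrite -tu.
Qed.
End Comb.

Open Scope ring_scope.

Section Lin.
Variables (R : realType) (n : nat).

Lemma consE (G : digraph n) (W : 'M[R]_n) i j : consistent G W -> (W i j != 0) = G j i.
Proof. by move=> c; rewrite c mxE; case: (G j i). Qed.

Lemma IWE (G : digraph n) (W : 'M[R]_n) a b : loopless G -> consistent G W ->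
  ((1%:M - W) a b != 0) = (a == b) || G b a.
Proof.
move=> l c; rewrite !mxE; have [->|ne] := eqVneq a b.
  have : W b b = 0 by apply/eqP; rewrite -[_ == 0]negbK (consE _ _ c) (negbTE (l b)).
  by move=> ->; rewrite subr0 oner_eq0.
by rewrite /= sub0r oppr_eq0 (consE _ _ c).
Qed.

Lemma row_mono_inj (M : 'M[R]_n) (t : 'I_n -> 'I_n) : M \in unitmx ->
  (forall j, M j (t j) != 0 /\ forall l, l != t j -> M j l = 0) -> injective t.
Proof.
move=> uM ht i i' e; apply/eqP/negP => /negP ne.
have [a0 a1] := ht i; have [b0 b1] := ht i'.
pose u : 'rV[R]_n := M i' (t i) *: delta_mx 0 i - M i (t i) *: delta_mx 0 i'.
have uM0 : u *m M = 0.
  rewrite mulmxBl -!scalemxAl -!rowE; apply/rowP => l; rewrite !mxE.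
  have [->|nl] := eqVneq l (t i); first by rewrite e mulrC subrr.
  by rewrite (a1 l nl) (b1 l) -?e // !mulr0 subrr.
have : u = 0 by rewrite -[u](mulmxK uM) uM0 mul0mx.
move/rowP/(_ i); rewrite !mxE !eqxx /= ?(eq_sym i' i) (negbTE ne) mulr1 mulr0 subr0 => /eqP.
by rewrite e (negbTE b0).
Qed.

Lemma lin_part (G1 G2 : digraph n) (W1 W2 M : 'M[R]_n) :
  loopless G1 -> loopless G2 -> consistent G1 W1 -> consistent G2 W2 ->
  M \in unitmx -> 1%:M - W2 = M *m (1%:M - W1) ->
  (forall j, exists k, M j k != 0 /\ forall l, l != k -> M j l = 0) ->
  same_condensation G1 G2.
Proof.
move=> l1 l2 c1 c2 uM E hr.
pose t j := odflt j [pick k | M j k != 0].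
have ht : forall j, M j (t j) != 0 /\ forall l, l != t j -> M j l = 0.
  move=> j; have [k [k0 kl]] := hr j; rewrite /t; case: pickP => [k' /= k'0|/(_ k) /=]; last by rewrite k0.
  have -> : k' = k by apply/eqP/negP => /negP ne; move: k'0; rewrite kl ?eqxx.
  by split.
have entry : forall i j, (1%:M - W2) i j = M i (t i) * (1%:M - W1) (t i) j.
  move=> i j; rewrite E mxE (bigD1 (t i)) //= big1 ?addr0 // => l nl.
  by rewrite (proj2 (ht i) l nl) mul0r.
apply: (same_cond l2 (row_mono_inj uM ht)).
- move=> i; have : (1%:M - W2) i i != 0 by rewrite (IWE i i l2 c2) eqxx.
  rewrite entry mulf_eq0 negb_or => /andP[_]; rewrite (IWE _ _ l1 c1).
  by case/orP => [/eqP->|->]; [left|right].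
- move=> i j ne; have := IWE i j l2 c2; rewrite (negbTE ne) /= => <-.
  by rewrite entry mulf_eq0 negb_or (proj1 (ht i)) /= (IWE _ _ l1 c1).
Qed.
End Lin.

Open Scope ring_scope.

Section Cube.
Variables (R : realType) (n : nat).
Notation T := {ffun 'I_n -> bool}.

Definition lv (M : 'M[R]_n) j (s : T) : R := \sum_k M j k * (s k)%:R.
Definition flip (k : 'I_n) (s : T) : T := [ffun i => if i == k then ~~ s i else s i].
Definition Lset (M : 'M[R]_n) j c := [set s : T | lv M j s == c].

Lemma flipK k : involutive (flip k).
Proof. by move=> s; apply/ffunP => i; rewrite !ffunE; case: eqP => // _; rewrite negbK. Qed.

Lemma lv_flip M j k s : lv M j (flip k s) = lv M j s + M j k * (if s k then -1 else 1).
Proof.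
rewrite /lv (bigD1 k) //= [in RHS](bigD1 k) //= ffunE eqxx.
rewrite (eq_bigr (fun i => M j i * (s i)%:R)); last by move=> i /negbTE ni; rewrite ffunE ni.
by case: (s k) => /=; rewrite ?mulr0 ?mulr1 ?mulrN1 ?add0r; rewrite addrC ?addrA ?subrK // addrK.
Qed.

Lemma flip_bound (M : 'M[R]_n) j k c : M j k != 0 -> (#|Lset M j c| * 2 <= #|T|)%N.
Proof.
move=> nz.
have sub : flip k @: Lset M j c \subset ~: Lset M j c.
  apply/fintype.subsetP => x /imsetP[s]; rewrite !inE => /eqP e ->.
  rewrite lv_flip e -subr_eq0 addrC addKr mulf_eq0 negb_or nz /=.
  by case: (s k); rewrite ?oppr_eq0 oner_eq0.
have := subset_leq_card sub; rewrite card_imset; last exact: (can_inj (flipK k)).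
by move=> h; rewrite -(cardsC (Lset M j c)) muln2 -addnn leq_add2l.
Qed.

Lemma Lset_disj (M : 'M[R]_n) j c c' : c != c' -> Lset M j c :&: Lset M j c' = finset.set0.
Proof.
move=> ne; apply/setP => s; rewrite !finset.inE.
by apply/negP => /andP[/eqP -> /eqP e]; move/eqP: ne.
Qed.

Lemma three_levels (M : 'M[R]_n) j
  (H : forall s0 : T, (#|Lset M j (lv M j s0)| * 2 = #|T|)%N) k l :
  M j k != 0 -> M j l != 0 -> k = l.
Proof.
move=> a0 b0; apply/eqP/negP => /negP kl.
pose z : T := [ffun _ => false].
pose ek : T := [ffun i => i == k].
pose el : T := [ffun i => i == l].
pose ekl : T := [ffun i => (i == k) || (i == l)].
have lz : lv M j z = 0 by rewrite /lv big1 // => i _; rewrite ffunE mulr0.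
have lk : lv M j ek = M j k.
  rewrite /lv (bigD1 k) //= big1 ?ffunE ?eqxx ?mulr1 ?addr0 // => i /negbTE ni.
  by rewrite ffunE ni mulr0.
have ll : lv M j el = M j l.
  rewrite /lv (bigD1 l) //= big1 ?ffunE ?eqxx ?mulr1 ?addr0 // => i /negbTE ni.
  by rewrite ffunE ni mulr0.
have lkl : lv M j ekl = M j k + M j l.
  rewrite /lv (bigD1 k) //= (bigD1 l) /=; last by rewrite eq_sym.
  rewrite big1 ?ffunE ?eqxx ?orbT ?mulr1 ?addr0 ?addrA //.
  by move=> i /andP[/negbTE ni /negbTE nk]; rewrite ffunE ni nk mulr0.
pose s3 := if M j l == M j k then ekl else el.
have d12 : lv M j z != lv M j ek by rewrite lz lk eq_sym.
have [d13 d23] : lv M j z != lv M j s3 /\ lv M j ek != lv M j s3.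
  rewrite /s3 lz lk; case: ifP => [/eqP e|/negbT ne].
    rewrite lkl e -mulr2n eq_sym mulrn_eq0 /= a0; split => //.
    apply/eqP => h; move: a0; have -> : M j k = 0; last by rewrite eqxx.
    by apply/eqP; move: h; rewrite mulr2n -{1}(addr0 (M j k)) => /addrI <-.
  by rewrite ll eq_sym b0 eq_sym ne.
have h1 := H z; have h2 := H ek; have h3 := H s3.
have sub : Lset M j (lv M j ek) :|: Lset M j (lv M j s3) \subset ~: Lset M j (lv M j z).
  apply/fintype.subsetP => s; rewrite !finset.inE => /orP[] /eqP ->.
  - by rewrite eq_sym.
  - by rewrite eq_sym.
have := subset_leq_card sub.
have := cardsU (Lset M j (lv M j ek)) (Lset M j (lv M j s3)).
rewrite Lset_disj // cards0 subn0 => ->.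
have : (0 < #|Lset M j (lv M j z)|)%N by apply/card_gt0P; exists z; rewrite finset.inE.
move: h1 h2 h3; rewrite -(cardsC (Lset M j (lv M j z))).
lia.
Qed.

Lemma row_nz (M : 'M[R]_n) j : M \in unitmx -> exists k, M j k != 0.
Proof.
move=> uM; case: (pickP (fun k => M j k != 0)) => [k hk|h]; first by exists k.
have : (delta_mx 0 j : 'rV[R]_n) *m M = 0.
  rewrite -rowE; apply/rowP => k; rewrite !mxE.
  by apply/eqP; move: (h k) => /= /negbFE.
move=> /(congr1 (mulmx^~ (invmx M))); rewrite mulmxK // mul0mx => /rowP/(_ j).
by rewrite !mxE !eqxx /= => /eqP; rewrite oner_eq0.
Qed.

Lemma row_mono (M : 'M[R]_n) : M \in unitmx ->
  (forall j (s0 : T), (#|Lset M j (lv M j s0)| * 2 = #|T|)%N) ->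
  forall j, exists k, M j k != 0 /\ forall l, l != k -> M j l = 0.
Proof.
move=> uM H j; have [k k0] := row_nz j uM; exists k; split => // l lk.
apply/eqP/negP => /negP l0; move/eqP: lk; apply.
exact: three_levels (H j) _ _ l0 k0.
Qed.
End Cube.

Open Scope ring_scope.

Section ExW.
Variables (R : realType) (n : nat) (G : digraph n).

Definition epsW : R := (n%:R + 1)^-1.
Definition Wof : 'M[R]_n := \matrix_(i, j) (if G j i then epsW else 0).

Lemma epsW_gt0 : 0 < epsW.
Proof. by rewrite /epsW invr_gt0 ltr_wpDl. Qed.

Lemma Wof_cons : consistent G Wof.
Proof.
move=> i j; rewrite !mxE; case: (G j i) => /=; last by rewrite eqxx.
by rewrite gt_eqF // epsW_gt0.
Qed.

Lemma Wof_unit : (1%:M - Wof) \in unitmx.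
Proof.
rewrite unitmxE unitfE; apply/negP => /det0P[v nz].
move=> /(congr1 (fun A => A + v *m Wof)); rewrite mulmxBr mulmx1 subrK add0r => ev.
pose S := \sum_i `|v 0 i|.
have hS : S <= n%:R * epsW * S.
  rewrite /S {1}ev.
  have h1 : forall j, `|(v *m Wof) 0 j| <= epsW * S.
    move=> j; rewrite mxE (le_trans (ler_norm_sum _ _ _)) // /S mulr_sumr ler_sum // => i _.
    rewrite mxE normrM mulrC ler_wpM2r //; case: (G j i); rewrite ?normr0 ?ger0_norm ?(ltW epsW_gt0) ?lexx //.
  apply: le_trans (ler_sum _ (fun j _ => h1 j)) _.
  by rewrite sumr_const card_ord -mulr_natl mulr1 -mulrA mulr_natl.
have Sge : 0 <= S by apply: sumr_ge0 => i _; exact: normr_ge0.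
have c : n%:R * epsW < 1 :> R.
  by rewrite /epsW ltr_pdivrMr ?mul1r ?ltrDl // ltr_wpDl.
have S0 : S = 0.
  apply/eqP; rewrite eq_le Sge andbT.
  move: hS c Sge; generalize (n%:R * epsW) => a; move: S => s.
  nra.
apply/negP: nz; rewrite negbK; apply/eqP/rowP => i; rewrite mxE.
by apply/normr0_eq0; apply: (psumr_eq0P _ S0) => // k _; exact: normr_ge0.
Qed.
End ExW.

Open Scope classical_set_scope.
Open Scope ring_scope.

Section Model.
Variables (R : realType) (n : nat).
Notation T := {ffun 'I_n -> bool}.

Definition pt (s : T) : n.-tuple R := [tuple (s i)%:R | i < n].
Definition z0 : T := [ffun _ => false].
Definition mu0 : {measure set (n.-tuple R) -> \bar R} :=
  msum (fun k => \d_(pt (nth z0 (enum T) k))) #|T|.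
Definition P1 : probability (n.-tuple R) R := mnormalize mu0 \d_(pt z0).

Definition cnt (A : set (n.-tuple R)) : R := \sum_(s : T) (pt s \in A)%:R.

Lemma mu0E A : mu0 A = (cnt A)%:E.
Proof.
rewrite /mu0 /= /msum.
rewrite (eq_bigr (fun k : 'I_#|T| => ((pt (nth z0 (enum T) k) \in A)%:R)%:E)); last by move=> k _; rewrite /= diracE.
rewrite sumEFin; congr EFin.
rewrite /cnt -[in RHS]big_enum /= (big_nth z0) big_mkord -cardE.
by [].
Qed.


Lemma cntT : cnt setT = #|T|%:R.
Proof.
rewrite /cnt (eq_bigr (fun _ => 1)) ?sumr_const //= => s _.
by rewrite in_setT.
Qed.

Lemma NT_gt0 : (0 < #|T|)%N.
Proof. by apply/card_gt0P; exists z0. Qed.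

Lemma P1E A : P1 A = (cnt A / #|T|%:R)%:E.
Proof.
rewrite /P1 /=; unfold mnormalize; rewrite !mu0E cntT.
have h : (#|T|%:R : R) != 0 by rewrite pnatr_eq0 -lt0n NT_gt0.
rewrite eqe (negbTE h) /=; have e := mu0E A; rewrite /mu0 /= in e; by rewrite e -EFinM.
Qed.

Definition ecoord (i : 'I_n) (w : n.-tuple R) : R := tnth w i.

Lemma tnth_pt (s : T) i : tnth (pt s) i = (s i)%:R.
Proof. by rewrite /pt tnth_mktuple. Qed.

Lemma prod_ind (b : 'I_n -> bool) : \prod_i (b i)%:R = [forall i, b i]%:R :> R.
Proof.
case: forallP => [h|/forallP/forallPn[i /negbTE hi]].
  by rewrite big1 // => i _; rewrite h.
by rewrite (bigD1 i) //= hi mul0r.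
Qed.

Lemma mem_bigcap (s : T) (A : 'I_n -> set R) :
  (pt s \in \bigcap_(i in [set: 'I_n]%classic) (ecoord i @^-1` A i)) = [forall i, (s i)%:R \in A i].
Proof.
apply/idP/forallP => [|h]; rewrite in_setE.
  by move=> h i; rewrite in_setE; have := h i I; rewrite /preimage /= /ecoord tnth_pt.
by move=> i _; rewrite /preimage /= /ecoord tnth_pt; have := h i; rewrite in_setE.
Qed.

Lemma mem_coord (s : T) (A : set R) i :
  (pt s \in ecoord i @^-1` A) = ((s i)%:R \in A).
Proof. by apply/idP/idP; rewrite !in_setE /preimage /= /ecoord tnth_pt. Qed.

Lemma cnt_coord (g : bool -> R) i :
  \sum_(s : T) g (s i) = (\sum_b g b) * \prod_(i' | i' != i) 2.
Proof.
pose h i' b := if i' == i then g b else 1.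
transitivity (\sum_(s : T) \prod_i' h i' (s i')).
  by apply: eq_bigr => s _; rewrite (bigD1 i) //= big1 ?mulr1 /h ?eqxx // => j /negbTE ->.
rewrite -bigA_distr_bigA /= (bigD1 i) //= /h eqxx; congr (_ * _).
apply: eq_bigr => j /negbTE ->; by rewrite big_bool.
Qed.

Lemma NT_pow : (#|T|%:R : R) = \prod_(i < n) 2.
Proof. by rewrite card_ffun card_bool card_ord prodr_const card_ord natrX. Qed.

Lemma P1_indep : jointly_independent P1 ecoord.
Proof.
move=> A _; rewrite P1E.
under eq_bigr do rewrite P1E.
rewrite prodEFin; congr EFin.
rewrite /cnt.
rewrite (eq_bigr (fun s : T => \prod_i (((s i)%:R : R) \in A i)%:R)); last first.
  by move=> s _; rewrite prod_ind; congr (_%:R); congr nat_of_bool; exact: mem_bigcap.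
rewrite [in RHS](eq_bigr (fun i => ((\sum_(b : bool) ((b%:R:R) \in A i)%:R) * \prod_(i' | i' != i) 2) / #|T|%:R)); last first.
  move=> i _; congr (_ / _); rewrite -cnt_coord; apply: eq_bigr => s _; congr (_%:R); congr nat_of_bool.
  exact: mem_coord.
rewrite -(@bigA_distr_bigA R 0 1 *%R +%R _ bool (fun i (b : bool) => ((b%:R : R) \in A i)%:R)) /= NT_pow.
have e2 : forall i : 'I_n, \prod_(i' < n) (2 : R) = 2 * \prod_(i' | i' != i) 2.
  by move=> i; rewrite (bigD1 i).
have key : forall (i : 'I_n) (a : R), a * \prod_(i' | i' != i) (2:R) / \prod_(i' < n) (2:R) = a / 2.
  move=> i a; rewrite (e2 i).
  have Q0 : \prod_(i' | i' != i) (2:R) != 0.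
    by apply/prodf_neq0 => ? _; apply/eqP; lra.
  by field.
under [in RHS]eq_bigr => i _ do rewrite key.
rewrite big_split /= prodr_const card_ord; congr (_ * _).
by rewrite prodr_const card_ord exprVn.
Qed.

Lemma cnt_ge (A : set (n.-tuple R)) (s : T) : pt s \in A -> 1 <= cnt A.
Proof.
by move=> h; rewrite /cnt (bigD1 s) //= h lerDl sumr_ge0.
Qed.

Lemma not_gauss i : ~ is_gaussian P1 (ecoord i).
Proof.
move=> [m [sg [_ h]]].
have := h [set 0] (measurable_set1 0).
have -> : normal_prob m sg [set 0] = 0%E.
  exact: ((null_content_dominatesP _ _).1 (normal_prob_dominates m sg) [set 0] (measurable_set1 0) (lebesgue_measure_set1 0)).
rewrite P1E => -[] /eqP; apply/negP; rewrite mulf_neq0 // ?invr_eq0 ?pnatr_eq0 -?lt0n ?NT_gt0 //.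
have : 1 <= cnt (ecoord i @^-1` [set 0]).
  by apply: (cnt_ge (s := z0)); rewrite in_setE /preimage /= /ecoord tnth_pt ffunE.
by apply: contraL => /eqP ->; rewrite ler10.
Qed.
End Model.

Open Scope classical_set_scope.
Open Scope ring_scope.

Section Main.
Variables (R : realType) (n : nat).
Notation T := {ffun 'I_n -> bool}.

Lemma sum_comp (K L : 'M[R]_n) (v : 'I_n -> R) j :
  \sum_k K j k * \sum_l L k l * v l = \sum_l (K *m L) j l * v l.
Proof.
under eq_bigr do rewrite mulr_sumr.
rewrite exchange_big /=; apply: eq_bigr => l _; rewrite mxE mulr_suml.
by apply: eq_bigr => k _; rewrite mulrA.
Qed.

Lemma sum_id (v : 'I_n -> R) j : \sum_l (1%:M : 'M[R]_n) j l * v l = v j.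
Proof.
rewrite (bigD1 j) //= big1 ?addr0 ?mxE ?eqxx ?mul1r // => l nl.
by rewrite mxE eq_sym (negbTE nl) mul0r.
Qed.

Definition lam (K : 'M[R]_n) j (x : n.-tuple R) : R := \sum_k K j k * tnth x k.

Lemma lam_meas K j : measurable_fun setT (lam K j).
Proof.
apply: measurable_sum => k; apply: measurable_realfun.measurable_funM; first exact: measurable_cst.
exact: measurable_tnth.
Qed.

Lemma prod_eq1 (b : 'I_n -> R) : (forall j, 0 <= b j <= 1) -> \prod_j b j = 1 -> forall j, b j = 1.
Proof.
move=> hb hp j; apply/eqP; rewrite eq_le (andP (hb j)).2 /=.
have : \prod_(i | i != j) b i <= 1.
  by apply: prodr_ile1 => i _; exact: hb.
move: hp; rewrite (bigD1 j) //= => hp h.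
have h0 : 0 <= \prod_(i | i != j) b i by apply: prodr_ge0 => i _; case/andP: (hb i).
have := (andP (hb j)).1; move: hp h h0; generalize (\prod_(i | i != j) b i) => q.
nra.
Qed.


Lemma cnt_card (X : set (n.-tuple R)) (p : pred T) :
  (forall s, (pt R s \in X) = p s) -> cnt X = #|[set s | p s]%SET|%:R.
Proof.
move=> h; rewrite /cnt (eq_bigr (fun s => if p s then 1 else 0)); last first.
  by move=> s _; rewrite h; case: (p s).
rewrite -big_mkcond /= sumr_const; congr (_ *+ _).
by apply: eq_card => s; rewrite finset.inE.
Qed.

Lemma lv_inj (M : 'M[R]_n) (s s0 : T) : M \in unitmx ->
  (forall j, lv M j s = lv M j s0) -> s = s0.
Proof.
move=> uM h.
pose vs (t : T) : 'cV[R]_n := \col_k (t k)%:R.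
have hv : forall t j, (M *m vs t) j 0 = lv M j t.
  by move=> t j; rewrite mxE /lv; apply: eq_bigr => k _; rewrite mxE.
have e : M *m vs s = M *m vs s0 by apply/colP => j; rewrite !hv h.
have := congr1 (mulmx (invmx M)) e; rewrite !mulKmx // => /colP e2.
apply/ffunP => k; have := e2 k; rewrite !mxE => /eqP; rewrite eqr_nat.
by case: (s k); case: (s0 k).
Qed.

Lemma main_thm (G1 G2 : digraph n) : loopless G1 -> loopless G2 ->
  lsem_distrs R G1 = lsem_distrs R G2 -> same_condensation G1 G2.
Proof.
move=> l1 l2 E.
pose W1 := Wof R G1.
have u1 : (1%:M - W1) \in unitmx by exact: Wof_unit.
pose A1 := invmx (1%:M - W1).
pose x1 := fun w : n.-tuple R => [tuple \sum_(j < n) A1 i j * ecoord j w | i < n].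
pose mu : distr_Rn R n := fun S => P1 R n (x1 @^-1` S).
have mu1 : lsem_distrs R G1 mu.
  exists W1; split; first exact: Wof_cons.
  split => //.
  exists _, _, (P1 R n), (@ecoord R n); split; first by move=> i; exact: measurable_tnth.
  split; first exact: P1_indep.
  split; first by move=> i j /not_gauss.
  by [].
rewrite E in mu1.
case: mu1 => W2 [c2 [u2 [d [Om [P2 [f [mf [indf [_ law]]]]]]]]].
pose M := (1%:M - W2) *m A1.
have uM : M \in unitmx by rewrite unitmx_mul u2 unitmx_inv u1.
have EM : 1%:M - W2 = M *m (1%:M - W1) by rewrite /M -mulmxA mulVmx // mulmx1.
apply: (lin_part l1 l2 (Wof_cons R G1) c2 uM EM).
apply: row_mono => // j s0.
pose K := 1%:M - W2.
pose c := fun j => lv M j s0.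
pose y := fun w => [tuple \sum_(j0 < n) invmx (1%:M - W2) i j0 * f j0 w | i < n].
have law' : forall A, measurable A -> mu A = P2 (y @^-1` A) := law.
have lam_y : forall j w, lam K j (y w) = f j w.
  move=> j' w; rewrite /lam (eq_bigr (fun k => K j' k * \sum_i invmx K k i * f i w)); last first.
    by move=> k _; rewrite tnth_mktuple.
  by rewrite sum_comp mulmxV // sum_id.
have lam_x : forall j s, lam K j (x1 (pt R s)) = lv M j s.
  move=> j' s; rewrite /lam (eq_bigr (fun k => K j' k * \sum_i A1 k i * (s i)%:R)); last first.
    move=> k _; rewrite tnth_mktuple; congr (_ * _); apply: eq_bigr => i _.
    by rewrite /ecoord tnth_pt.
  by rewrite sum_comp.
have m1 : forall (C : R) j, measurable (lam K j @^-1` [set C]).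
  by move=> C j'; have := lam_meas K j' measurableT (measurable_set1 C); rewrite setTI.
have mall : measurable (\bigcap_(j in [set: 'I_n]) (lam K j @^-1` [set c j])).
  by apply: fin_bigcap_measurable => [|j' _]; [exact: finite_finset|exact: m1].
have pall : P2 (\bigcap_(j in [set: 'I_n]) (f j @^-1` [set c j])) = (1 / #|T|%:R)%:E.
  have -> : \bigcap_(j in [set: 'I_n]) (f j @^-1` [set c j]) =
      y @^-1` (\bigcap_(j in [set: 'I_n]) (lam K j @^-1` [set c j])).
    apply/seteqP; split => w /= h j' _; have := h j' I; rewrite /preimage /= ?lam_y //.
  rewrite -law' // /mu P1E; congr (_%:E); congr (_ / _).
  rewrite (@cnt_card _ (fun s => s == s0)); last first.
    move=> s; apply/idP/eqP => [h|->].
      apply: lv_inj uM _ => j'; move: h; rewrite in_setE => /(_ j' I).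
      by rewrite /preimage /= lam_x.
    by rewrite in_setE => j' _; rewrite /preimage /= lam_x.
  have -> : [set s | s == s0]%SET = [set s0]%SET by apply/setP => s; rewrite !finset.inE.
  by rewrite cards1.
have pj : forall j, P2 (f j @^-1` [set c j]) = (#|Lset M j (c j)|%:R / #|T|%:R)%:E.
  move=> j'; have -> : f j' @^-1` [set c j'] = y @^-1` (lam K j' @^-1` [set c j']).
    by apply/seteqP; split => w /=; rewrite /preimage /= lam_y.
  rewrite -law' // /mu P1E; congr (_%:E); congr (_ / _).
  apply: cnt_card => s; apply/idP/idP; rewrite in_setE /preimage /= lam_x => /eqP //.
have hind := indf (fun j => [set c j]) (fun j => measurable_set1 (c j)).
rewrite pall (eq_bigr _ (fun j _ => pj j)) prodEFin in hind.
case: hind => hind.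
have NT0 : (0 < #|T|%:R :> R) by rewrite ltr0n NT_gt0.
have hb : forall j : 'I_n, 0 <= ((#|Lset M j (c j)| * 2)%:R / #|T|%:R : R) <= 1.
  move=> j'; have [k k0] := @row_nz R n M j' uM; apply/andP; split; first by rewrite divr_ge0.
  by rewrite ler_pdivrMr // mul1r ler_nat; exact: flip_bound k0.
have hp : \prod_j ((#|Lset M j (c j)| * 2)%:R / #|T|%:R : R) = 1.
  under eq_bigr do rewrite natrM mulrAC.
  by rewrite big_split /= -hind NT_pow mul1r mulVf // -NT_pow gt_eqF.
have := prod_eq1 hb hp j.
move/(congr1 (fun x => x * #|T|%:R)); rewrite mul1r divfK ?gt_eqF // => /eqP.
by rewrite eqr_nat => /eqP.
Qed.
End Main.


Theorem corollary1 (R : realType) (n : nat) (G1 G2 : digraph n) :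
  loopless G1 -> loopless G2 ->
  lsem_distrs R G1 = lsem_distrs R G2 ->
  same_condensation G1 G2.
Proof. exact: main_thm. Qed.
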